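(* Let $\xi>0$ be such that $D^TD-\xi^2I$ is nonsingular, let $N$ be a positive integer and let the mesh $\Omega_N=\{\theta_{N,i}: i=-N,\dots,N\}$ satisfy $\theta_{N,-i}=-\theta_{N,i}$ for $i=1,\dots,N$. Then for all $\lambda\in\mathbb{C}$, $\det(\lambda I-\mathcal{L}_\xi^N)=0$ if and only if $\det(-\bar\lambda I-\mathcal{L}_\xi^N)=0$.
   Context: Let $n,m,n_u,n_y$ be positive integers, $A_0,\dots,A_m\in\mathbb{R}^{n\times n}$, $B\in\mathbb{R}^{n\times n_u}$, $C\in\mathbb{R}^{n_y\times n}$, $D\in\mathbb{R}^{n_y\times n_u}$, delays $\tau_1,\dots,\tau_m\ge0$, $\tau_{\max}=\max_i\tau_i>0$. For $\xi>0$ put $D_\xi=D^TD-\xi^2I_{n_u}$, $\tilde D_\xi=DD^T-\xi^2I_{n_y}$, and define $2n\times2n$ matrices $M_0=\begin{bmatrix} A_0-BD_\xi^{-1}D^TC & -BD_\xi^{-1}B^T\\ \xi^2 C^T\tilde D_\xi^{-1}C & -A_0^T+C^TDD_\xi^{-1}B^T\end{bmatrix}$, $M_i=\begin{bmatrix}A_i&0\\0&0\end{bmatrix}$, $M_{-i}=\begin{bmatrix}0&0\\0&-A_i^T\end{bmatrix}$, $1\le i\le m$. A mesh $\Omega_N$ consists of $2N+1$ points $-\tau_{\max}\le\theta_{N,-N}<\dots<\theta_{N,0}=0<\dots<\theta_{N,N}\le\tau_{\max}$. Let $X_N=(\mathbb{C}^{2n})^{2N+1}$ with elements $x=(x_{-N},\dots,x_N)$,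 and let $\mathcal{P}_Nx$ be the unique $\mathbb{C}^{2n}$-valued polynomial of degree $\le 2N$ with $\mathcal{P}_Nx(\theta_{N,i})=x_i$ for all $i$. The matrix $\mathcal{L}_\xi^N:X_N\to X_N$ is defined by $(\mathcal{L}_\xi^Nx)_i=(\mathcal{P}_Nx)'(\theta_{N,i})$ for $i\ne0$ and $(\mathcal{L}_\xi^Nx)_0=M_0\mathcal{P}_Nx(0)+\sum_{i=1}^m\left(M_i\mathcal{P}_Nx(-\tau_i)+M_{-i}\mathcal{P}_Nx(\tau_i)\right)$. *)

(* Defs.v *)
From HB Require Import structures.
From mathcomp Require Import all_boot all_order all_algebra.
From mathcomp Require Import complex.
Set Implicit Arguments. Unset Strict Implicit. Unset Printing Implicit Defensive.
Import Order.TTheory GRing.Theory Num.Theory.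
Local Open Scope ring_scope.

Section Defs.
Variable R : rcfType.
Local Notation C := (R[i]).
Definition toC (x : R) : C := Complex x 0.
Definition mxC m k (A : 'M[R]_(m, k)) : 'M[C]_(m, k) := map_mx toC A.

Definition Dxi nu ny (D : 'M[R]_(ny, nu)) (xi : R) : 'M[R]_nu :=
  D^T *m D - (xi ^+ 2)%:M.
Definition Dtxi nu ny (D : 'M[R]_(ny, nu)) (xi : R) : 'M[R]_ny :=
  D *m D^T - (xi ^+ 2)%:M.

Definition M0 n nu ny (A0 : 'M[R]_n) (B : 'M[R]_(n, nu)) (Cm : 'M[R]_(ny, n))
    (D : 'M[R]_(ny, nu)) (xi : R) : 'M[R]_(n + n) :=
  let Di := invmx (Dxi D xi) in
  let Dti := invmx (Dtxi D xi) in
  block_mx (A0 - B *m Di *m D^T *m Cm) (- (B *m Di *m B^T))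
           ((xi ^+ 2) *: (Cm^T *m Dti *m Cm)) (- A0^T + Cm^T *m D *m Di *m B^T).

Definition Mplus n (Ai : 'M[R]_n) : 'M[R]_(n + n) := block_mx Ai 0 0 0.
Definition Mminus n (Ai : 'M[R]_n) : 'M[R]_(n + n) := block_mx 0 0 0 (- Ai^T).

Definition taumax m (tau : 'I_m -> R) : R := \big[Num.max/0]_(i < m) tau i.

(* Mesh Omega_N: index k : 'I_(N+N).+1 stands for i = k - N, so
   theta k = theta_{N, k-N}; the middle index is N (i = 0). *)
Definition mid N : 'I_(N + N).+1 := inord N.

Definition is_mesh N (tm : R) (theta : 'I_(N + N).+1 -> R) : Prop :=
  [/\ forall k l : 'I_(N + N).+1, (k < l)%N -> theta k < theta l,
      theta (mid N) = 0 &
      forall k, - tm <= theta k <= tm].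

Definition lagr N (theta : 'I_(N + N).+1 -> R) (j : 'I_(N + N).+1) : {poly C} :=
  \prod_(k < (N + N).+1 | k != j)
     ((toC (theta j) - toC (theta k))^-1 *: ('X - (toC (theta k))%:P)).

(* X_N = (C^{2n})^{2N+1}, an element x is stored as a matrix whose k-th row is
   x_{k-N} in C^{2n} (as a row vector).
   P_N x = the C^{2n}-valued interpolating polynomial, stored componentwise. *)
Definition PN N n2 (theta : 'I_(N + N).+1 -> R) (x : 'M[C]_((N + N).+1, n2))
  : 'rV[{poly C}]_n2 :=
  \row_c \sum_(j < (N + N).+1) x j c *: lagr theta j.

Definition PNeval N n2 theta (x : 'M[C]_((N + N).+1, n2)) (t : C) : 'rV[C]_n2 :=
  \row_c ((PN theta x) 0 c).[t].
Definition PNderiv N n2 theta (x : 'M[C]_((N + N).+1, n2)) (t : C) : 'rV[C]_n2 :=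
  \row_c ((PN theta x) 0 c)^`().[t].

Definition LxiN_op n nu ny m N (A0 : 'M[R]_n) (As : 'I_m -> 'M[R]_n)
    (B : 'M[R]_(n, nu)) (Cm : 'M[R]_(ny, n)) (D : 'M[R]_(ny, nu))
    (tau : 'I_m -> R) (theta : 'I_(N + N).+1 -> R) (xi : R)
    (x : 'M[C]_((N + N).+1, n + n)) : 'M[C]_((N + N).+1, n + n) :=
  \matrix_(k < (N + N).+1)
    if k == mid N then
      (mxC (M0 A0 B Cm D xi) *m (PNeval theta x 0)^T
       + \sum_(i < m) (mxC (Mplus (As i)) *m (PNeval theta x (toC (- tau i)))^T
                       + mxC (Mminus (As i)) *m (PNeval theta x (toC (tau i)))^T))^T
    else PNderiv theta x (toC (theta k)).

Definition LxiN n nu ny m N A0 As B Cm D tau theta xi :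
  'M[C]_((N + N).+1 * (n + n)) :=
  lin_mx (@LxiN_op n nu ny m N A0 As B Cm D tau theta xi).

End Defs.

(* Main.v *)
Require Import Defs.
From HB Require Import structures.
From mathcomp Require Import all_boot all_order all_algebra.
From mathcomp Require Import complex zify ring.
Set Implicit Arguments. Unset Strict Implicit. Unset Printing Implicit Defensive.
Import Order.TTheory GRing.Theory Num.Theory.
Local Open Scope ring_scope.

Section Gen.
Variable F : fieldType.

Definition Tgen p q (r : 'I_p) (G : 'M[F]_p) (H : 'I_p -> 'M[F]_q)
  (x : 'M[F]_(p, q)) : 'M[F]_(p, q) :=
  \matrix_k if k == r then (\sum_j H j *m (row j x)^T)^T else row k (G *m x).

Lemma TgenP p q r G H (x : 'M[F]_(p, q)) :
  Tgen r G H x = 0 <->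
  (forall k, k != r -> row k (G *m x) = 0) /\ \sum_j H j *m (row j x)^T = 0.
Proof.
split.
  move=> /row_matrixP h; split.
    by move=> k nk; have := h k; rewrite rowK (negbTE nk) row0.
  by have := h r; rewrite rowK eqxx row0 => /(congr1 trmx); rewrite trmxK trmx0.
move=> [h1 h2]; apply/row_matrixP => k; rewrite rowK row0.
by case: eqP => [_|/eqP nk]; [rewrite h2 trmx0 | exact: h1].
Qed.

Lemma row_cmul p q (c : 'cV[F]_p) (w : 'rV[F]_q) j : row j (c *m w) = c j 0 *: w.
Proof. by apply/rowP => e; rewrite !mxE big_ord1. Qed.

Lemma sum_cmul p q (K : 'I_p -> 'M[F]_q) (c : 'cV[F]_p) (w : 'rV[F]_q) :
  \sum_j K j *m (row j (c *m w))^T = (\sum_j c j 0 *: K j) *m w^T.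
Proof.
rewrite mulmx_suml; apply: eq_bigr => j _.
by rewrite row_cmul linearZ /= -scalemxAr scalemxAl.
Qed.

Lemma S4 p q (r : 'I_p) (G : 'M[F]_p) (H : 'I_p -> 'M[F]_q) :
  (exists2 x, x != 0 & Tgen r G H x = 0) ->
  exists2 y, y != 0 & Tgen r G (fun j => (H j)^T) y = 0.
Proof.
move=> [x nzx /TgenP [hG hH]].
have /existsP [i0 /existsP [a nz]] : [exists i0, exists a, x i0 a != 0].
  apply: contraR nzx => /existsPn h; apply/eqP/matrixP => i j.
  by move: (h i) => /existsPn /(_ j) /negPn /eqP ->; rewrite mxE.
have colG b k : k != r -> (G *m col b x) k 0 = 0.
  move=> nk; rewrite colE mulmxA -colE mxE.
  by have := hG k nk => /rowP /(_ b); rewrite mxE [RHS]mxE.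
pose c := col a x.
pose v := \row_b (x i0 b / x i0 a).
case: (eqVneq x (c *m v)) => [xcv | ne].
  pose P := \sum_j c j 0 *: H j.
  have Pv : P *m v^T = 0 by rewrite -sum_cmul -xcv.
  have nzv : v != 0.
    apply/negP => /eqP /rowP /(_ a); rewrite !mxE divff //.
    by move/eqP; rewrite oner_eq0.
  have /det0P [w nzw wP] : \det P == 0.
    rewrite -det_tr; apply/det0P; exists v => //.
    by rewrite -[v]trmxK -trmx_mul Pv trmx0.
  exists (c *m w).
    apply: contra nzw => /eqP cw0; apply/eqP/rowP => e.
    have := congr1 (fun M : 'M[F]_(p,q) => M i0 e) cw0; rewrite !mxE big_ord1 !mxE.
    by move/eqP; rewrite mulf_eq0 (negbTE nz) /= => /eqP.
  apply/TgenP; split.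
    move=> k nk; rewrite mulmxA row_cmul.
    by rewrite colG // scale0r.
  rewrite sum_cmul.
  have -> : \sum_j c j 0 *: (H j)^T = P^T by rewrite /P linear_sum; apply: eq_bigr => j _; rewrite linearZ.
  by rewrite -trmx_mul wP trmx0.
have /existsP [i /existsP [b nib]] : [exists i, exists b, x i b != (c *m v) i b].
  apply: contraR ne => /existsPn h; apply/eqP/matrixP => i j.
  by move: (h i) => /existsPn /(_ j) /negPn /eqP.
have hcv : (c *m v) i b = x i a * (x i0 b / x i0 a) by rewrite !mxE big_ord1 !mxE.
pose d := col b x.
pose dl := x i0 a * x i b - x i a * x i0 b.
have ndl : dl != 0.
  apply: contra nib => /eqP h; rewrite hcv; apply/eqP.
  move/eqP: h; rewrite subr_eq0 => /eqP h.
  by rewrite mulrA -h mulrAC divff // mul1r.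
pose P1 := \sum_j c j 0 *: H j.
pose P2 := \sum_j d j 0 *: H j.
pose Z : 'M[F]_(q + q) := row_mx (col_mx P1 P2) 0.
have /det0P [z nzz zZ] : \det Z == 0.
  rewrite -det_tr; apply/det0P; exists (row_mx 0 (delta_mx 0 b)).
    rewrite row_mx_eq0 eqxx /=; apply/negP => /eqP /rowP /(_ b).
    by rewrite !mxE !eqxx /= => /eqP; rewrite oner_eq0.
  by rewrite tr_row_mx mul_row_col trmx0 mulmx0 mul0mx addr0.
set l := lsubmx z; set rr := rsubmx z.
have zP : l *m P1 + rr *m P2 = 0.
  move: zZ; rewrite /Z mul_mx_row => /eqP; rewrite row_mx_eq0 => /andP [/eqP h _].
  by rewrite -mul_row_col /l /rr hsubmxK.
have rowD k (A B : 'M[F]_(p, q)) : row k (A + B) = row k A + row k B.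
  by apply/rowP => e; rewrite !mxE.
exists (c *m l + d *m rr).
  apply: contra nzz => /eqP y0.
  have E k e : x k a * l 0 e + x k b * rr 0 e = 0.
    by have := congr1 (fun M : 'M[F]_(p,q) => M k e) y0; rewrite !mxE !big_ord1 !mxE.
  have l0 : l = 0.
    apply/rowP => e; rewrite [RHS]mxE; apply/eqP.
    have : dl * l 0 e = 0.
      rewrite (_ : dl * _ = x i b * (x i0 a * l 0 e + x i0 b * rr 0 e)
                            - x i0 b * (x i a * l 0 e + x i b * rr 0 e)).
        by rewrite !E !mulr0 subrr.
      by rewrite /dl; ring.
    by move/eqP; rewrite mulf_eq0 (negbTE ndl).
  have r0 : rr = 0.
    apply/rowP => e; rewrite [RHS]mxE; apply/eqP.
    have : dl * rr 0 e = 0.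
      rewrite (_ : dl * _ = x i0 a * (x i a * l 0 e + x i b * rr 0 e)
                            - x i a * (x i0 a * l 0 e + x i0 b * rr 0 e)).
        by rewrite !E !mulr0 subrr.
      by rewrite /dl; ring.
    by move/eqP; rewrite mulf_eq0 (negbTE ndl).
  by rewrite -[z]hsubmxK -/l -/rr l0 r0 row_mx0.
apply/TgenP; split.
  move=> k nk; rewrite mulmxDr !mulmxA rowD !row_cmul.
  by rewrite !colG // !scale0r addr0.
have -> : \sum_j (H j)^T *m (row j (c *m l + d *m rr))^T =
   \sum_j (H j)^T *m (row j (c *m l))^T + \sum_j (H j)^T *m (row j (d *m rr))^T.
  by rewrite -big_split; apply: eq_bigr => j _; rewrite rowD linearD /= mulmxDr.
rewrite !sum_cmul.
have TT (w : 'cV[F]_p) : \sum_j w j 0 *: (H j)^T = (\sum_j w j 0 *: H j)^T.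
  by rewrite linear_sum; apply: eq_bigr => j _; rewrite linearZ.
by rewrite !TT -!trmx_mul -linearD /= zP trmx0.
Qed.


Lemma rowDx p q k (A B : 'M[F]_(p, q)) : row k (A + B) = row k A + row k B.
Proof. by apply/rowP => e; rewrite !mxE. Qed.

Lemma rowZx p q k a (A : 'M[F]_(p, q)) : row k (a *: A) = a *: row k A.
Proof. by apply/rowP => e; rewrite !mxE. Qed.

Lemma Tgen_is_linear p q r G H : linear (@Tgen p q r G H).
Proof.
move=> a x y; apply/row_matrixP => k; rewrite rowDx rowZx !rowK.
case: ifP => _.
  rewrite -linearZ -linearD /=; congr (_^T).
  rewrite scaler_sumr -big_split; apply: eq_bigr => j _.
  by rewrite rowDx rowZx linearD linearZ /= mulmxDr scalemxAr.
by rewrite mulmxDr -scalemxAr rowDx rowZx.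
Qed.

Section Inst.
Variables (p q : nat) (r : 'I_p) (G : 'M[F]_p) (H : 'I_p -> 'M[F]_q).
HB.instance Definition _ := GRing.isLinear.Build F 'M[F]_(p, q) 'M[F]_(p, q) _ (Tgen r G H)
  (@Tgen_is_linear p q r G H).
End Inst.

Lemma lin_mx_ext m1 n1 m2 n2 (f g : 'M[F]_(m1, n1) -> 'M[F]_(m2, n2)) :
  f =1 g -> lin_mx f = lin_mx g.
Proof. by move=> fg; apply/matrixP => i j; rewrite !mxE /= fg. Qed.

Lemma eig_Tgen p q r G H (lam : F) :
  \det (lam%:M - lin_mx (@Tgen p q r G H)) = 0 <->
  exists2 x, x != 0 & Tgen r G H x = lam *: x.
Proof.
split.
  move/eqP/det0P => [u nzu uA]; exists (vec_mx u).
    apply: contra nzu => /eqP h; apply/eqP.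
    by rewrite -[u]vec_mxK h linear0.
  move: uA; rewrite mulmxBr mul_mx_scalar => /eqP; rewrite subr_eq0 => /eqP h.
  by rewrite -mx_rV_lin -h linearZ.
move=> [x nzx fx]; apply/eqP/det0P; exists (mxvec x).
  apply: contra nzx => /eqP h; apply/eqP.
  by rewrite -[x]mxvecK h linear0.
by rewrite mulmxBr mul_mx_scalar mul_vec_lin /= fx linearZ subrr.
Qed.

Lemma Tgen_shift p q r G H (lam : F) (x : 'M[F]_(p, q)) :
  Tgen r G H x - lam *: x =
  Tgen r (G - lam%:M) (fun j => H j - ((j == r)%:R * lam)%:M) x.
Proof.
apply/row_matrixP => k; rewrite rowDx -scaleN1r rowZx !rowK scaleN1r.
case: ifP => [/eqP ->|_].
  apply: (can_inj (@trmxK _ _ _)); rewrite !linearD /= !trmxK linearN /=.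
  under [in RHS]eq_bigr do rewrite mulmxBl.
  rewrite sumrB; congr (_ - _).
  rewrite (bigD1 r) //= big1 ?addr0; last first.
    by move=> j /negbTE ->; rewrite mul0r raddf0 mul0mx.
  by rewrite eqxx mul1r mul_scalar_mx rowZx linearZ.
by rewrite mulmxBl mul_scalar_mx; apply/rowP => e; rewrite !mxE.
Qed.

Lemma Tgen_extH p q r G (H1 H2 : 'I_p -> 'M[F]_q) (x : 'M[F]_(p, q)) :
  H1 =1 H2 -> Tgen r G H1 x = Tgen r G H2 x.
Proof.
move=> e; apply/row_matrixP => k; rewrite !rowK; case: ifP => // _.
by congr (_^T); apply: eq_bigr => j _; rewrite e.
Qed.

Lemma eig_tr p q r G H (lam : F) :
  (exists2 x : 'M[F]_(p, q), x != 0 & Tgen r G H x = lam *: x) ->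
  exists2 y : 'M[F]_(p, q), y != 0 & Tgen r G (fun j => (H j)^T) y = lam *: y.
Proof.
move=> [x nzx fx].
have [|y nzy hy] := @S4 p q r (G - lam%:M) (fun j => H j - ((j == r)%:R * lam)%:M).
  by exists x => //; have := Tgen_shift r G H lam x; rewrite fx subrr => <-.
exists y => //; apply/eqP; rewrite -subr_eq0 Tgen_shift; apply/eqP.
rewrite -[RHS]hy; apply: Tgen_extH => j.
by rewrite linearD linearN /= tr_scalar_mx.
Qed.

End Gen.

Section Lag.
Variable R : rcfType.
Local Notation C := (R[i]).
Variable N : nat.
Local Notation p := (N + N).+1.
Variable theta : 'I_p -> R.

Lemma PNevalE n2 (x : 'M[C]_(p, n2)) t :
  PNeval theta x t = \sum_j (lagr theta j).[t] *: row j x.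
Proof.
apply/rowP => c; rewrite /PNeval /PN !mxE horner_sum summxE.
by apply: eq_bigr => j _; rewrite hornerZ !mxE mulrC.
Qed.

Lemma PNderivE n2 (x : 'M[C]_(p, n2)) t :
  PNderiv theta x t = \sum_j (lagr theta j)^`().[t] *: row j x.
Proof.
apply/rowP => c; rewrite /PNderiv /PN !mxE raddf_sum horner_sum summxE.
by apply: eq_bigr => j _; rewrite /= derivZ hornerZ !mxE mulrC. Qed.


Section Nodes.
Hypothesis inj : injective theta.
Lemma toC_inj : injective (@toC R).
Proof. by move=> a b []. Qed.

Lemma toCN (a : R) : toC (- a) = - toC a.
Proof. by rewrite /toC; apply/eqP; rewrite eq_complex /= oppr0 !eqxx. Qed.

Lemma toC0 : toC (0 : R) = 0.
Proof. by []. Qed.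

Lemma nodes_neq j k : j != k -> toC (theta j) - toC (theta k) != 0.
Proof.
move=> ne; rewrite subr_eq0; apply/negP => /eqP /toC_inj /inj /eqP.
by rewrite (negbTE ne).
Qed.

Lemma lagr_node j k : (lagr theta j).[toC (theta k)] = (j == k)%:R.
Proof.
rewrite /lagr horner_prod; case: (eqVneq j k) => [<-|ne].
  rewrite big1 // => i ne; rewrite hornerZ !hornerE mulVf //.
  by apply: nodes_neq; rewrite eq_sym.
rewrite (bigD1 k) 1?eq_sym //= hornerZ !hornerE subrr mulr0 mul0r //.
Qed.

Lemma size_lagr j : (size (lagr theta j) <= p)%N.
Proof.
apply: leq_trans (size_poly_prod_leq _ _) _.
rewrite (eq_bigr (fun _ => 2%N)); last first.
  move=> i ne; rewrite size_scale ?size_XsubC //.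
  by rewrite invr_eq0 nodes_neq // eq_sym.
rewrite sum_nat_const; set c := #|_|.
have -> : c = (N + N)%N by rewrite /c cardC1 card_ord.
lia.
Qed.


Lemma poly_eq_nodes (P Q : {poly C}) : (size P <= p)%N -> (size Q <= p)%N ->
  (forall k, P.[toC (theta k)] = Q.[toC (theta k)]) -> P = Q.
Proof.
move=> sP sQ e; apply/eqP; rewrite -subr_eq0; apply/eqP.
apply: (@roots_geq_poly_eq0 _ _ [seq toC (theta k) | k <- enum 'I_p]).
- by apply/allP => t /mapP [k _ ->]; rewrite /root hornerD hornerN e subrr.
- rewrite map_inj_uniq ?enum_uniq // => a b /toC_inj; exact: inj.
rewrite size_map size_enum_ord.
apply: leq_trans (size_polyD _ _) _; rewrite size_polyN geq_max; exact/andP.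
Qed.

Hypothesis sym : forall k, theta (rev_ord k) = - theta k.

Lemma lagr_rev j : lagr theta (rev_ord j) = (lagr theta j) \Po (- 'X).
Proof.
apply: poly_eq_nodes.
- exact: size_lagr.
- rewrite size_comp_poly2 ?size_lagr // size_polyN size_polyX //.
move=> k; rewrite horner_comp hornerN hornerX -toCN -sym !lagr_node.
by rewrite -(inj_eq rev_ord_inj) rev_ordK.
Qed.

Lemma ev_rev j t : (lagr theta (rev_ord j)).[t] = (lagr theta j).[- t].
Proof. by rewrite lagr_rev horner_comp hornerN hornerX. Qed.

Lemma dv_rev j t : (lagr theta (rev_ord j))^`().[t] = - (lagr theta j)^`().[- t].
Proof.
rewrite lagr_rev deriv_comp derivN derivX hornerM horner_comp !hornerN hornerX.
by rewrite hornerC mulrN1.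
Qed.

End Nodes.
End Lag.

Section Op.
Variable R : rcfType.
Local Notation C := (R[i]).
Variables (N q m : nat).
Local Notation p := (N + N).+1.
Variable theta : 'I_p -> R.
Variable tau : 'I_m -> R.

Definition Op (K0 : 'M[C]_q) (Kp Km : 'I_m -> 'M[C]_q) (x : 'M[C]_(p, q)) : 'M[C]_(p, q) :=
  \matrix_(k < p)
    if k == mid N then
      (K0 *m (PNeval theta x 0)^T
       + \sum_(i < m) (Kp i *m (PNeval theta x (toC (- tau i)))^T
                       + Km i *m (PNeval theta x (toC (tau i)))^T))^T
    else PNderiv theta x (toC (theta k)).

Definition Gd : 'M[C]_p := \matrix_(k, j) (lagr theta j)^`().[toC (theta k)].

Definition Hs (K0 : 'M[C]_q) (Kp Km : 'I_m -> 'M[C]_q) (j : 'I_p) : 'M[C]_q :=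
  (lagr theta j).[0] *: K0 + \sum_i ((lagr theta j).[toC (- tau i)] *: Kp i
                                   + (lagr theta j).[toC (tau i)] *: Km i).

Lemma mul_PNeval (K : 'M[C]_q) (x : 'M[C]_(p, q)) t :
  K *m (PNeval theta x t)^T = \sum_j (lagr theta j).[t] *: (K *m (row j x)^T).
Proof.
rewrite PNevalE linear_sum mulmx_sumr; apply: eq_bigr => j _.
by rewrite linearZ /= scalemxAr.
Qed.

Lemma OpE K0 Kp Km x : Op K0 Kp Km x = Tgen (mid N) Gd (Hs K0 Kp Km) x.
Proof.
apply/row_matrixP => k; rewrite !rowK; case: ifP => _.
  congr (_^T).
  under [RHS]eq_bigr do rewrite mulmxDl mulmx_suml.
  rewrite mul_PNeval [RHS]big_split /=; congr (_ + _).
    by apply: eq_bigr => j _; rewrite scalemxAl.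
  rewrite [RHS]exchange_big /=; apply: eq_bigr => i _.
  rewrite !mul_PNeval -big_split /=; apply: eq_bigr => j _.
  by rewrite mulmxDl -!scalemxAl.
rewrite row_mul mulmx_sum_row PNderivE; apply: eq_bigr => j _.
by rewrite !mxE.
Qed.

Lemma Op_ext K0 K0' (Kp Kp' Km Km' : 'I_m -> 'M[C]_q) x :
  K0 = K0' -> Kp =1 Kp' -> Km =1 Km' -> Op K0 Kp Km x = Op K0' Kp' Km' x.
Proof.
move=> -> hp hm; rewrite !OpE; apply: Tgen_extH => j; rewrite /Hs.
by congr (_ + _); apply: eq_bigr => i _; rewrite hp hm.
Qed.

Lemma Hs_tr K0 Kp Km j :
  Hs K0^T (fun i => (Kp i)^T) (fun i => (Km i)^T) j = (Hs K0 Kp Km j)^T.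
Proof.
rewrite /Hs linearD linear_sum /= linearZ; congr (_ + _).
by apply: eq_bigr => i _; rewrite linearD /= !linearZ.
Qed.

End Op.

Section Map.
Variable F : fieldType.
Variable f : {rmorphism F -> F}.

Lemma Tgen_map p q r (G : 'M[F]_p) (H : 'I_p -> 'M[F]_q) (x : 'M[F]_(p, q)) :
  map_mx f (Tgen r G H x) =
  Tgen r (map_mx f G) (fun j => map_mx f (H j)) (map_mx f x).
Proof.
apply/row_matrixP => k; rewrite -map_row !rowK; case: ifP => _.
  rewrite -map_trmx raddf_sum; congr (_^T); apply: eq_bigr => j _.
  by rewrite /= map_mxM -map_trmx map_row.
by rewrite map_row map_mxM.
Qed.
End Map.

Section Conj.
Variable R : rcfType.
Local Notation C := (R[i]).
Variables (N q m : nat).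
Local Notation p := (N + N).+1.
Variable theta : 'I_p -> R.
Variable tau : 'I_m -> R.

Lemma conj_toC (a : R) : conjc (toC a) = toC a.
Proof. by apply/eqP; rewrite eq_complex /= oppr0 !eqxx. Qed.

Lemma conjM (a b : C) : conjc (a * b) = conjc a * conjc b.
Proof. exact: rmorphM. Qed.
Lemma conjB (a b : C) : conjc (a - b) = conjc a - conjc b.
Proof. exact: rmorphB. Qed.
Lemma conjV (a : C) : conjc (a^-1) = (conjc a)^-1.
Proof. exact: fmorphV. Qed.
Lemma conjN (a : C) : conjc (- a) = - conjc a.
Proof. exact: rmorphN. Qed.
Lemma conj_nat k : conjc (k%:R : C) = k%:R.
Proof. exact: rmorph_nat. Qed.
Lemma conj0 : conjc (0 : C) = 0.
Proof. exact: rmorph0. Qed.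

Lemma lagr_conj j : map_poly conjc (lagr theta j) = lagr theta j.
Proof.
rewrite /lagr rmorph_prod; apply: eq_bigr => k _.
apply/polyP => i; rewrite coef_map /= !coefE conjM conjV !conjB !conj_toC conj_nat.
by case: (i == 0); rewrite ?conj_toC ?conj0.
Qed.

Lemma conj_horner (P : {poly C}) x : conjc (P.[x]) = (map_poly conjc P).[conjc x].
Proof. by rewrite horner_map. Qed.

Lemma conj_deriv (P : {poly C}) : map_poly conjc (P^`()) = (map_poly conjc P)^`().
Proof. by rewrite deriv_map. Qed.

Lemma ev_conj j t : conjc ((lagr theta j).[toC t]) = (lagr theta j).[toC t].
Proof. by rewrite conj_horner lagr_conj conj_toC. Qed.

Lemma dv_conj j t : conjc ((lagr theta j)^`().[toC t]) = (lagr theta j)^`().[toC t].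
Proof. by rewrite conj_horner conj_deriv lagr_conj conj_toC. Qed.

Lemma ev_conj0 j : conjc ((lagr theta j).[0]) = (lagr theta j).[0].
Proof. exact: (ev_conj j 0). Qed.

Lemma map_conjZ r s (a : C) (A : 'M[C]_(r, s)) :
  map_mx conjc (a *: A) = conjc a *: map_mx conjc A.
Proof. exact: map_mxZ. Qed.

Lemma map_Gd : map_mx conjc (Gd theta) = Gd theta.
Proof. by apply/matrixP => k j; rewrite !mxE dv_conj. Qed.

Lemma map_Hs (K0 : 'M[C]_q) (Kp Km : 'I_m -> 'M[C]_q) j :
  map_mx conjc (Hs theta tau K0 Kp Km j) =
  Hs theta tau (map_mx conjc K0) (fun i => map_mx conjc (Kp i))
     (fun i => map_mx conjc (Km i)) j.
Proof.
rewrite /Hs map_mxD map_conjZ raddf_sum /= ev_conj0; congr (_ + _).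
by apply: eq_bigr => i _; rewrite map_mxD !map_conjZ !ev_conj.
Qed.

Lemma conj_eig (K0 : 'M[C]_q) (Kp Km : 'I_m -> 'M[C]_q) (lam : C) (x : 'M[C]_(p, q)) :
  map_mx conjc K0 = K0 -> (forall i, map_mx conjc (Kp i) = Kp i) ->
  (forall i, map_mx conjc (Km i) = Km i) ->
  Tgen (mid N) (Gd theta) (Hs theta tau K0 Kp Km) x = lam *: x ->
  Tgen (mid N) (Gd theta) (Hs theta tau K0 Kp Km) (map_mx conjc x)
    = conjc lam *: map_mx conjc x.
Proof.
move=> h0 hp hm /(congr1 (map_mx conjc)); rewrite Tgen_map map_conjZ map_Gd => <-.
apply: Tgen_extH => j; rewrite map_Hs h0.
by rewrite /Hs; congr (_ + _); apply: eq_bigr => i _; rewrite hp hm.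
Qed.
End Conj.

Section Refl.
Variable R : rcfType.
Local Notation C := (R[i]).
Variables (N q m : nat).
Local Notation p := (N + N).+1.
Variable theta : 'I_p -> R.
Variable tau : 'I_m -> R.
Hypothesis inj : injective theta.
Hypothesis sym : forall k, theta (rev_ord k) = - theta k.
Hypothesis th0 : theta (mid N) = 0.
Variable J : 'M[C]_q.
Hypothesis hJ : J *m J^T = 1%:M.

Definition refl (x : 'M[C]_(p, q)) : 'M[C]_(p, q) :=
  \matrix_k (row (rev_ord k) x *m J).

Lemma PNeval_refl (x : 'M[C]_(p, q)) t : PNeval theta (refl x) t = PNeval theta x (- t) *m J.
Proof.
rewrite !PNevalE mulmx_suml (reindex_inj rev_ord_inj) /=.
apply: eq_bigr => j _; rewrite rowK rev_ordK ev_rev //.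
by rewrite scalemxAl.
Qed.

Lemma PNderiv_refl (x : 'M[C]_(p, q)) t : PNderiv theta (refl x) t = - (PNderiv theta x (- t) *m J).
Proof.
rewrite !PNderivE mulmx_suml -sumrN (reindex_inj rev_ord_inj) /=.
apply: eq_bigr => j _; rewrite rowK rev_ordK dv_rev //.
by rewrite scaleNr scalemxAl.
Qed.

Lemma rev_mid : rev_ord (mid N) = mid N.
Proof. by apply/val_inj; rewrite /= /mid inordK; lia. Qed.

Lemma PNeval_node (x : 'M[C]_(p, q)) k : PNeval theta x (toC (theta k)) = row k x.
Proof.
rewrite PNevalE (bigD1 k) //= lagr_node // eqxx scale1r big1 ?addr0 //.
by move=> j /negbTE; rewrite lagr_node // => ->; rewrite scale0r.
Qed.

Lemma refl_eq0 (x : 'M[C]_(p, q)) : refl x = 0 -> x = 0.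
Proof.
move=> h; apply/row_matrixP => k; rewrite row0.
have := congr1 (fun M : 'M[C]_(p, q) => row (rev_ord k) M *m J^T) h.
by rewrite rowK rev_ordK -mulmxA hJ mulmx1 row0 mul0mx.
Qed.

Lemma S3 (K0 : 'M[C]_q) (Kp Km : 'I_m -> 'M[C]_q) (lam : C) (x : 'M[C]_(p, q)) :
  Op theta tau K0 Kp Km x = lam *: x ->
  Op theta tau (- (J^T *m K0 *m J)) (fun i => - (J^T *m Km i *m J))
     (fun i => - (J^T *m Kp i *m J)) (refl x) = - lam *: refl x.
Proof.
move=> h.
have hr k : row k (Op theta tau K0 Kp Km x) = lam *: row k x by rewrite h rowZx.
have hK (K : 'M[C]_q) t : - (J^T *m K *m J) *m (PNeval theta (refl x) t)^T
    = - (J^T *m (K *m (PNeval theta x (- t))^T)).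
  by rewrite PNeval_refl trmx_mul mulNmx !mulmxA -(mulmxA _ J) hJ mulmx1.
apply/row_matrixP => k; rewrite rowZx !rowK.
case: ifP => [/eqP -> | nk].
  rewrite rev_mid hK oppr0.
  under eq_bigr do rewrite !hK -!toCN opprK.
  have := hr (mid N); rewrite rowK eqxx => E.
  have E' : K0 *m (PNeval theta x 0)^T
      + \sum_i (Kp i *m (PNeval theta x (toC (- tau i)))^T
                 + Km i *m (PNeval theta x (toC (tau i)))^T)
      = (lam *: row (mid N) x)^T by rewrite -E trmxK.
  rewrite (_ : - _ + _ = - (J^T *m (K0 *m (PNeval theta x 0)^T
      + \sum_i (Kp i *m (PNeval theta x (toC (- tau i)))^T
                 + Km i *m (PNeval theta x (toC (tau i)))^T)))).
    by rewrite E' linearN /= trmx_mul !trmxK scaleNr -scalemxAl.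
  rewrite mulmxDr opprD mulmx_sumr -sumrN; congr (_ + _).
  by apply: eq_bigr => i _; rewrite mulmxDr opprD addrC.
rewrite PNderiv_refl -toCN -sym.
have := hr (rev_ord k); rewrite rowK.
have -> : (rev_ord k == mid N) = false.
  by apply/negbTE/eqP => e; move: nk; rewrite -[k]rev_ordK e rev_mid eqxx.
by move=> ->; rewrite -scalemxAl scaleNr.
Qed.

End Refl.

Section Blocks.
Variable R : rcfType.
Local Notation C := (R[i]).

Lemma toC_is_additive : additive (@toC R).
Proof. exact: (@rmorphB _ _ (@real_complex R)). Qed.
Lemma toC_is_multiplicative : multiplicative (@toC R).
Proof. split; [exact: (@rmorphM _ _ (@real_complex R)) | exact: (@rmorph1 _ _ (@real_complex R))]. Qed.

End Blocks.

HB.instance Definition _ (R : rcfType) := GRing.isAdditive.Build R R[i] (@toC R)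
  (@toC_is_additive R).
HB.instance Definition _ (R : rcfType) := GRing.isMultiplicative.Build R R[i] (@toC R)
  (@toC_is_multiplicative R).

Section Blocks2.
Variable R : rcfType.
Local Notation C := (R[i]).
Variable n : nat.

Definition JR : 'M[R]_(n + n) := block_mx 0 1%:M (- 1%:M) 0.

Lemma JR_tr : JR *m JR^T = 1%:M.
Proof.
rewrite /JR tr_block_mx mulmx_block !trmx0 tr_scalar_mx linearN /= tr_scalar_mx.
rewrite !mul0mx !mulmx0 !mul1mx !addr0 !add0r mulNmx mul1mx opprK.
by rewrite scalar_mx_block.
Qed.

Lemma JR_conj (a b c d : 'M[R]_n) :
  - (JR^T *m block_mx a b c d *m JR) = block_mx (- d) c b (- a).
Proof.
rewrite /JR tr_block_mx !trmx0 tr_scalar_mx linearN /= tr_scalar_mx.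
rewrite !mulmx_block.
rewrite !mul0mx !mulmx0 !mul1mx !mulmx1 !addr0 !add0r !mulNmx !mulmxN !mul1mx !mulmx1 ?opprK.
by rewrite opp_block_mx !opprK.
Qed.

End Blocks2.

Section Blocks3.
Variable R : rcfType.
Local Notation C := (R[i]).
Variables (n nu ny : nat).
Variables (A0 : 'M[R]_n) (B : 'M[R]_(n, nu)) (Cm : 'M[R]_(ny, n)) (D : 'M[R]_(ny, nu)) (xi : R).

Lemma trD r s (X Y : 'M[R]_(r, s)) : (X + Y)^T = X^T + Y^T.
Proof. by apply/matrixP => i j; rewrite !mxE. Qed.
Lemma trN r s (X : 'M[R]_(r, s)) : (- X)^T = - X^T.
Proof. by apply/matrixP => i j; rewrite !mxE. Qed.

Lemma Di_sym : (invmx (Dxi D xi))^T = invmx (Dxi D xi).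
Proof. by rewrite trmx_inv /Dxi linearB /= trmx_mul trmxK tr_scalar_mx. Qed.

Lemma Dti_sym : (invmx (Dtxi D xi))^T = invmx (Dtxi D xi).
Proof. by rewrite trmx_inv /Dtxi linearB /= trmx_mul trmxK tr_scalar_mx. Qed.

Lemma M0_conj : - ((JR R n)^T *m M0 A0 B Cm D xi *m JR R n) = (M0 A0 B Cm D xi)^T.
Proof.
rewrite /M0 JR_conj tr_block_mx; congr block_mx.
- by rewrite opprD opprK linearB /= !trmx_mul !trmxK Di_sym !mulmxA.
- by rewrite linearZ /= !trmx_mul !trmxK Dti_sym !mulmxA.
- by rewrite linearN /= !trmx_mul !trmxK Di_sym !mulmxA.
- by rewrite trD trN trmxK !trmx_mul !trmxK Di_sym !mulmxA opprD opprK.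
Qed.

Lemma Mminus_conj (A : 'M[R]_n) : - ((JR R n)^T *m Mminus A *m JR R n) = (Mplus A)^T.
Proof. by rewrite /Mminus /Mplus JR_conj tr_block_mx !trmx0 opprK oppr0. Qed.

Lemma Mplus_conj (A : 'M[R]_n) : - ((JR R n)^T *m Mplus A *m JR R n) = (Mminus A)^T.
Proof. by rewrite /Mminus /Mplus JR_conj tr_block_mx !trmx0 oppr0 linearN /= trmxK. Qed.

Lemma mxC_conj (M : 'M[R]_(n + n)) :
  mxC (- ((JR R n)^T *m M *m JR R n)) =
  - ((mxC (JR R n))^T *m mxC M *m mxC (JR R n)).
Proof. by rewrite /mxC map_mxN !map_mxM map_trmx. Qed.

Lemma mxC_tr r s (M : 'M[R]_(r, s)) : mxC M^T = (mxC M)^T.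
Proof. by rewrite /mxC map_trmx. Qed.

Lemma mxC_real r s (M : 'M[R]_(r, s)) : map_mx conjc (mxC M) = mxC M.
Proof. by apply/matrixP => i j; rewrite !mxE conj_toC. Qed.

Lemma JC_tr : mxC (JR R n) *m (mxC (JR R n))^T = 1%:M.
Proof. by rewrite -mxC_tr /mxC -map_mxM JR_tr map_scalar_mx rmorph1. Qed.

End Blocks3.

Unset Implicit Arguments.

Theorem proposition2 (R : rcfType) (n nu ny m N : nat)
    (A0 : 'M[R]_n) (As : 'I_m -> 'M[R]_n) (B : 'M[R]_(n, nu))
    (Cm : 'M[R]_(ny, n)) (D : 'M[R]_(ny, nu))
    (tau : 'I_m -> R) (theta : 'I_(N + N).+1 -> R) (xi : R) :
  (0 < n)%N -> (0 < nu)%N -> (0 < ny)%N -> (0 < m)%N -> (0 < N)%N ->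
  (forall i, 0 <= tau i) -> 0 < taumax tau ->
  0 < xi -> Dxi D xi \in unitmx ->
  is_mesh (taumax tau) theta ->
  (forall k, theta (rev_ord k) = - theta k) ->
  forall lam : R[i],
    \det (lam%:M - LxiN A0 As B Cm D tau theta xi) = 0 <->
    \det ((- conjc lam)%:M - LxiN A0 As B Cm D tau theta xi) = 0.
Proof.
move=> _ _ _ _ _ _ _ _ _ [incr _ _] sym.
have inj : injective theta.
  move=> k l e; case: (ltngtP k l) => [kl|lk|/val_inj //].
    by have := incr k l kl; rewrite e ltxx.
  by have := incr l k lk; rewrite e ltxx.
pose K0 := mxC (M0 A0 B Cm D xi).
pose Kp := fun i => mxC (Mplus (As i)).
pose Km := fun i => mxC (Mminus (As i)).
have LE : LxiN A0 As B Cm D tau theta xi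
          = lin_mx (Tgen (mid N) (Gd theta) (Hs theta tau K0 Kp Km)).
  by apply: lin_mx_ext => x; exact: (OpE theta tau K0 Kp Km x).
pose J := mxC (JR R n).
have hJ : J *m J^T = 1%:M by exact: JC_tr.
have key : forall mu : R[i], \det (mu%:M - LxiN A0 As B Cm D tau theta xi) = 0 ->
    \det ((- conjc mu)%:M - LxiN A0 As B Cm D tau theta xi) = 0.
  move=> mu; rewrite LE => /eig_Tgen [x nzx hx].
  have hc := conj_eig (mxC_real _) (fun i => mxC_real _) (fun i => mxC_real _) hx.
  rewrite -OpE in hc.
  have nzc : map_mx conjc x != 0.
    apply: contra nzx => /eqP h; apply/eqP/matrixP => i j.
    have := congr1 (fun M : 'M[R[i]]_((N + N).+1, n + n) => M i j) h.
    by rewrite !mxE => /eqP; rewrite conjc_eq0 => /eqP.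
  have h3 := S3 inj sym hJ hc.
  have nz3 : refl J (map_mx conjc x) != 0.
    by apply: contra nzc => /eqP /(refl_eq0 hJ) ->.
  have h4 : Op theta tau K0^T (fun i => (Kp i)^T) (fun i => (Km i)^T)
              (refl J (map_mx conjc x)) = - conjc mu *: refl J (map_mx conjc x).
    rewrite -[RHS]h3; apply: Op_ext.
    - by rewrite /K0 -mxC_tr -M0_conj mxC_conj.
    - by move=> i; rewrite /Kp /Km -mxC_tr -Mminus_conj mxC_conj.
    - by move=> i; rewrite /Kp /Km -mxC_tr -Mplus_conj mxC_conj.
  rewrite OpE in h4.
  have h5 : Tgen (mid N) (Gd theta) (fun j => (Hs theta tau K0 Kp Km j)^T)
              (refl J (map_mx conjc x)) = - conjc mu *: refl J (map_mx conjc x).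
    by rewrite -[RHS]h4; apply: Tgen_extH => j; rewrite Hs_tr.
  have [|z nzz hz] := @eig_tr _ _ _ (mid N) (Gd theta)
      (fun j => (Hs theta tau K0 Kp Km j)^T) (- conjc mu).
    by exists (refl J (map_mx conjc x)).
  apply/eig_Tgen; exists z => //; rewrite -[RHS]hz.
  by apply: Tgen_extH => j; rewrite trmxK.
move=> lam; split; first exact: key.
by move/key; rewrite conjN conjcK opprK.
Qed.
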